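(* Let $c_1,\dots,c_k\in(0,\infty)$ be fixed constants, and let $\lambda\in(0,\infty)^k$ be a tuning parameter satisfying, for every $j\in\{1,\dots,k\}$, $$\frac{\lambda_j}{2g'(\|Y-X\hat\beta^\lambda\|_2^2)}=c_j\,\|(XP_jM_j^{+})^\top\varepsilon\|_{q_j}^*$$ (such a $\lambda$ exists with probability one). Then, with probability one, for any minimizer $\hat\beta^\lambda$ of the objective below, $$\frac1n\|X(\beta^*-\hat\beta^\lambda)\|_2^2\le\inf_{u\in(0,1),\,\beta\in\mathbb{R}^p}\Big\{\frac{1}{4u(1-u)n}\|X(\beta^*-\beta)\|_2^2+\frac1n\sum_{j=1}^k\frac{1+c_j}{1-u}\|(XP_jM_j^{+})^\top\varepsilon\|_{q_j}^*\,\|M_j\beta\|_{q_j}-\frac1n\sum_{j=1}^k\frac{c_j-1}{1-u}\|(XP_jM_j^{+})^\top\varepsilon\|_{q_j}^*\,\|M_j\hat\beta^\lambda\|_{q_j}\Big\}.$$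
   Context: Standing setup. Model: $Y=X\beta^*+\varepsilon$ with $Y\in\mathbb{R}^n$, $X\in\mathbb{R}^{n\times p}$, $\beta^*\in\mathbb{R}^p$, $\varepsilon\in\mathbb{R}^n$ (random; no distributional assumptions beyond those below). Link function $g:\mathbb{R}\to[0,\infty)$ with $g(0)=0$, $g$ continuous and strictly increasing on $[0,\infty)$, continuously differentiable on $(0,\infty)$ with strictly positive and non-increasing derivative $g'$, and such that $\alpha\mapsto g(\|\alpha\|_2^2)$ is strictly convex on $\mathbb{R}^n$. Penalty: $k\ge1$, matrices $M_1,\dots,M_k\in\mathbb{R}^{p\times p}$ with $\bigcap_{j=1}^k\mathrm{Ker}(M_j)=\{0\}$, exponents $q_j\ge1$, $\|\cdot\|_{q_j}$ the $\ell_{q_j}$-norm on $\mathbb{R}^p$, and $\|\cdot\|_{q_j}^*$ its dual norm (the $\ell_{p_j}$-norm with $1/p_j+1/q_j=1$). For $\lambda\in(0,\infty)^k$, $\hat\beta^\lambda$ denotes any element of $\arg\min_{\beta\in\mathbb{R}^p}\{g(\|Y-X\beta\|_2^2)+\sum_{j=1}^k\lambda_j\|M_j\beta\|_{q_j}\}$. $A^+$ denotes the Moore–Penrose pseudoinverse; $P_1,\dots,P_k\in\mathbb{R}^{p\times p}$ are fixed projection matrices with $\sum_{j=1}^kP_jM_j^+M_j=I_{p\times p}$. Noise assumption: with probability one, $Y\neq0$ and $\min_{j}\|(XP_jM_j^{+})^\top\varepsilon\|_{q_j}^*>0$. *)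

(* Defs.v *)
From Stdlib Require Import Reals Lra List.
Import ListNotations.
Open Scope R_scope.

(* Vectors are functions nat -> R (only indices < dimension matter);
   matrices are functions nat -> nat -> R (row, column). *)
Definition vec := nat -> R.
Definition mat := nat -> nat -> R.

Definition fsum (d : nat) (f : nat -> R) : R :=
  fold_right Rplus 0 (map f (seq 0 d)).

(* real power with the convention 0 ^ y = 0 (used with y > 0) *)
Definition rpow (x y : R) : R :=
  if Req_EM_T x 0 then 0 else Rpower x y.

Definition lqnorm (d : nat) (q : R) (x : vec) : R :=
  rpow (fsum d (fun i => rpow (Rabs (x i)) q)) (/ q).

Definition supnorm (d : nat) (x : vec) : R :=
  fold_right Rmax 0 (map (fun i => Rabs (x i)) (seq 0 d)).

(* dual norm of l_q (q >= 1): the l_p norm with 1/p + 1/q = 1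
   (p = infinity when q = 1) *)
Definition dualnorm (d : nat) (q : R) (x : vec) : R :=
  if Req_EM_T q 1 then supnorm d x else lqnorm d (q / (q - 1)) x.

Definition sqnorm (d : nat) (x : vec) : R := fsum d (fun i => x i * x i).

Definition mulmv (d : nat) (A : mat) (v : vec) : vec :=
  fun i => fsum d (fun l => A i l * v l).

Definition mulmm (d : nat) (A B : mat) : mat :=
  fun i j => fsum d (fun l => A i l * B l j).

Definition trmx (A : mat) : mat := fun i j => A j i.

Definition vsub (x y : vec) : vec := fun i => x i - y i.
Definition vadd (x y : vec) : vec := fun i => x i + y i.
Definition vscale (t : R) (x : vec) : vec := fun i => t * x i.

Definition mat_eq (m r : nat) (A B : mat) : Prop :=
  forall i j, (i < m)%nat -> (j < r)%nat -> A i j = B i j.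

(* Mp is the Moore-Penrose pseudoinverse of the p x p matrix M
   (the four Penrose conditions; the pseudoinverse is unique). *)
Definition is_MP_pinv (p : nat) (M Mp : mat) : Prop :=
  mat_eq p p (mulmm p (mulmm p M Mp) M) M /\
  mat_eq p p (mulmm p (mulmm p Mp M) Mp) Mp /\
  mat_eq p p (trmx (mulmm p M Mp)) (mulmm p M Mp) /\
  mat_eq p p (trmx (mulmm p Mp M)) (mulmm p Mp M).

Definition is_projection (p : nat) (P : mat) : Prop :=
  mat_eq p p (mulmm p P P) P.

Definition idmx : mat := fun i j => if Nat.eqb i j then 1 else 0.

Definition link_ok (n : nat) (g gp : R -> R) : Prop :=
  g 0 = 0 /\
  (forall x, 0 <= g x) /\
  (forall x eps, 0 <= x -> 0 < eps -> exists delta, 0 < delta /\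
      forall y, 0 <= y -> Rabs (y - x) < delta -> Rabs (g y - g x) < eps) /\
  (forall x y, 0 <= x -> x < y -> g x < g y) /\
  (forall x, 0 < x -> derivable_pt_lim g x (gp x)) /\
  (forall x, 0 < x -> continuity_pt gp x) /\
  (forall x, 0 < x -> 0 < gp x) /\
  (forall x y, 0 < x -> x <= y -> gp y <= gp x) /\
  (forall (a b : vec) t, (exists i, (i < n)%nat /\ a i <> b i) -> 0 < t < 1 ->
      g (sqnorm n (vadd (vscale t a) (vscale (1 - t) b)))
        < t * g (sqnorm n a) + (1 - t) * g (sqnorm n b)).

Definition objective (n p k : nat) (g : R -> R) (X : mat) (Y : vec)
  (M : nat -> mat) (q : nat -> R) (lam : nat -> R) (b : vec) : R :=
  g (sqnorm n (vsub Y (mulmv p X b)))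
  + fsum k (fun j => lam j * lqnorm p (q j) (mulmv p (M j) b)).

(* Main.v *)
Require Import Defs.
From Stdlib Require Import Reals Lra Lia List.
Open Scope R_scope.

Lemma fold_plus_acc : forall l x, fold_right Rplus x l = fold_right Rplus 0 l + x.
Proof. induction l; intros; simpl; [lra| rewrite IHl; lra]. Qed.

Lemma fsum_0 : forall f, fsum 0 f = 0.
Proof. reflexivity. Qed.

Lemma fsum_S : forall d f, fsum (S d) f = fsum d f + f d.
Proof.
  intros. unfold fsum. rewrite seq_S, map_app, fold_right_app. simpl.
  rewrite fold_plus_acc. lra.
Qed.

Lemma fsum_ext : forall d f g, (forall i, (i < d)%nat -> f i = g i) -> fsum d f = fsum d g.
Proof.
  induction d; intros; [reflexivity|]. rewrite !fsum_S. rewrite (IHd f g), (H d); auto; intros; apply H; lia.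
Qed.

Lemma fsum_plus : forall d f g, fsum d (fun i => f i + g i) = fsum d f + fsum d g.
Proof. induction d; intros; [unfold fsum; simpl; lra|]. rewrite !fsum_S, IHd. lra. Qed.

Lemma fsum_scal : forall d c f, fsum d (fun i => c * f i) = c * fsum d f.
Proof. induction d; intros; [unfold fsum; simpl; lra|]. rewrite !fsum_S, IHd. lra. Qed.

Lemma fsum_scal_r : forall d c f, fsum d (fun i => f i * c) = fsum d f * c.
Proof. induction d; intros; [unfold fsum; simpl; lra|]. rewrite !fsum_S, IHd. lra. Qed.

Lemma fsum_opp : forall d f, fsum d (fun i => - f i) = - fsum d f.
Proof. induction d; intros; [unfold fsum; simpl; lra|]. rewrite !fsum_S, IHd. lra. Qed.

Lemma fsum_minus : forall d f g, fsum d (fun i => f i - g i) = fsum d f - fsum d g.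
Proof. induction d; intros; [unfold fsum; simpl; lra|]. rewrite !fsum_S, IHd. lra. Qed.

Lemma fsum_swap : forall d e F,
  fsum d (fun i => fsum e (fun j => F i j)) = fsum e (fun j => fsum d (fun i => F i j)).
Proof.
  induction d; intros.
  - rewrite !fsum_0. induction e; [reflexivity|]. rewrite fsum_S, <- IHe, fsum_0. lra.
  - rewrite fsum_S, IHd, <- fsum_plus. apply fsum_ext. intros. rewrite fsum_S. reflexivity.
Qed.

Lemma fsum_le : forall d f g, (forall i, (i < d)%nat -> f i <= g i) -> fsum d f <= fsum d g.
Proof.
  induction d; intros; [unfold fsum; simpl; lra|]. rewrite !fsum_S.
  assert (fsum d f <= fsum d g) by (apply IHd; intros; apply H; lia). specialize (H d). assert (f d <= g d) by (apply H; lia). lra.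
Qed.

Lemma fsum_nonneg : forall d f, (forall i, (i < d)%nat -> 0 <= f i) -> 0 <= fsum d f.
Proof.
  intros. replace 0 with (fsum d (fun _ => 0)). apply fsum_le; auto.
  clear. induction d; [reflexivity|]. rewrite fsum_S, IHd. lra.
Qed.

Lemma fsum_ge_term : forall d f i, (forall i, (i < d)%nat -> 0 <= f i) -> (i < d)%nat ->
  f i <= fsum d f.
Proof.
  induction d; intros; [lia|]. rewrite fsum_S.
  destruct (Nat.eq_dec i d).
  - subst. assert (0 <= fsum d f) by (apply fsum_nonneg; intros; apply H; lia). lra.
  - assert (f i <= fsum d f) by (apply IHd; intros; try apply H; lia). assert (0 <= f d) by (apply H; lia). lra.
Qed.

Lemma fsum_zero_each : forall d f, (forall i, (i < d)%nat -> 0 <= f i) ->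
  fsum d f = 0 -> forall i, (i < d)%nat -> f i = 0.
Proof.
  intros. pose proof (fsum_ge_term d f i H H1). specialize (H i H1). lra.
Qed.

Lemma fsum_abs : forall d f, Rabs (fsum d f) <= fsum d (fun i => Rabs (f i)).
Proof.
  induction d; intros; [unfold fsum; simpl; rewrite Rabs_R0; lra|]. rewrite !fsum_S.
  eapply Rle_trans; [apply Rabs_triang|]. specialize (IHd f). lra.
Qed.

Lemma fsum_zero : forall d, fsum d (fun _ => 0) = 0.
Proof. induction d; [reflexivity|]. rewrite fsum_S, IHd. lra. Qed.

Lemma fsum_delta : forall d l v, (l < d)%nat -> fsum d (fun b => idmx l b * v b) = v l.
Proof.
  induction d; intros; [lia|]. rewrite fsum_S. unfold idmx at 2.
  destruct (Nat.eq_dec l d).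
  - subst. rewrite Nat.eqb_refl.
    rewrite (fsum_ext _ _ (fun _ => 0)).
    + rewrite fsum_zero. lra.
    + intros. unfold idmx. replace (Nat.eqb d i) with false. lra.
      symmetry. apply Nat.eqb_neq. lia.
  - replace (Nat.eqb l d) with false by (symmetry; apply Nat.eqb_neq; auto).
    rewrite IHd by lia. lra.
Qed.

Lemma supnorm_ge : forall d x i, (i < d)%nat -> Rabs (x i) <= supnorm d x.
Proof.
  intros. unfold supnorm.
  assert (In (Rabs (x i)) (map (fun i => Rabs (x i)) (seq 0 d))).
  { apply (in_map (fun i => Rabs (x i))). apply in_seq. lia. }
  revert H0. generalize (map (fun i => Rabs (x i)) (seq 0 d)). intros l.
  induction l; simpl; intros; [contradiction|].
  destruct H0.
  - subst. apply Rmax_l.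
  - eapply Rle_trans; [apply IHl; auto| apply Rmax_r].
Qed.

Lemma rpow_0x : forall y, rpow 0 y = 0.
Proof. intros. unfold rpow. destruct (Req_EM_T 0 0); [auto|congruence]. Qed.

Lemma rpow_pos_eq : forall x y, 0 < x -> rpow x y = Rpower x y.
Proof. intros. unfold rpow. destruct (Req_EM_T x 0); [lra|auto]. Qed.

Lemma rpow_ge0 : forall x y, 0 <= rpow x y.
Proof. intros. unfold rpow. destruct (Req_EM_T x 0); [lra|]. unfold Rpower. left; apply exp_pos. Qed.

Lemma rpow_gt0 : forall x y, 0 < x -> 0 < rpow x y.
Proof. intros. rewrite rpow_pos_eq by auto. unfold Rpower. apply exp_pos. Qed.

Lemma rpow_1 : forall x, 0 <= x -> rpow x 1 = x.
Proof.
  intros. destruct H. rewrite rpow_pos_eq by auto. apply Rpower_1; auto.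
  subst. apply rpow_0x.
Qed.

Lemma rpow_rpow : forall x a b, 0 <= x -> rpow (rpow x a) b = rpow x (a * b).
Proof.
  intros. destruct H.
  - rewrite (rpow_pos_eq x a), (rpow_pos_eq x) by auto.
    rewrite rpow_pos_eq. apply Rpower_mult. unfold Rpower; apply exp_pos.
  - subst. rewrite !rpow_0x. reflexivity.
Qed.

Lemma rpow_mult : forall x y a, 0 <= x -> 0 <= y -> rpow (x * y) a = rpow x a * rpow y a.
Proof.
  intros. destruct H; [destruct H0|].
  - rewrite !rpow_pos_eq; auto. symmetry; apply Rpower_mult_distr; auto.
    apply Rmult_lt_0_compat; auto.
  - subst. rewrite Rmult_0_r, !rpow_0x. ring.
  - subst. rewrite Rmult_0_l, !rpow_0x. ring.
Qed.

Lemma rpow_plus : forall x a b, 0 < x -> rpow x (a + b) = rpow x a * rpow x b.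
Proof. intros. rewrite !rpow_pos_eq by auto. apply Rpower_plus. Qed.

Lemma rpow_eq0 : forall x a, rpow x a = 0 -> x = 0.
Proof.
  intros. destruct (Req_EM_T x 0); auto. unfold rpow in H.
  destruct (Req_EM_T x 0); [auto|]. unfold Rpower in H. pose proof (exp_pos (a * ln x)). lra.
Qed.

Lemma rpow_le : forall x y a, 0 <= x <= y -> 0 <= a -> rpow x a <= rpow y a.
Proof.
  intros. destruct H. destruct H.
  - rewrite !rpow_pos_eq by lra. apply Rle_Rpower_l; auto; lra.
  - subst. rewrite rpow_0x. apply rpow_ge0.
Qed.

Lemma exp_convex : forall t x y, 0 <= t <= 1 ->
  exp (t * x + (1 - t) * y) <= t * exp x + (1 - t) * exp y.
Proof.
  intros. set (m := t * x + (1 - t) * y).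
  assert (ex : exp x = exp m * exp (x - m)) by (rewrite <- exp_plus; f_equal; ring).
  assert (ey : exp y = exp m * exp (y - m)) by (rewrite <- exp_plus; f_equal; ring).
  pose proof (exp_ineq1_le (x - m)). pose proof (exp_ineq1_le (y - m)).
  pose proof (exp_pos m).
  assert (exp m * (1 + (x - m)) <= exp m * exp (x - m)) by (apply Rmult_le_compat_l; lra).
  assert (exp m * (1 + (y - m)) <= exp m * exp (y - m)) by (apply Rmult_le_compat_l; lra).
  rewrite ex, ey.
  assert (t * (exp m * (1 + (x - m))) + (1 - t) * (exp m * (1 + (y - m))) = exp m)
    by (unfold m; ring).
  nra.
Qed.

Lemma young : forall a b p q, 0 <= a -> 0 <= b -> 1 < p -> 1 < q -> / p + / q = 1 ->
  a * b <= rpow a p / p + rpow b q / q.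
Proof.
  intros.
  assert (0 <= rpow a p / p) by (apply Rmult_le_pos; [apply rpow_ge0| left; apply Rinv_0_lt_compat; lra]).
  assert (0 <= rpow b q / q) by (apply Rmult_le_pos; [apply rpow_ge0| left; apply Rinv_0_lt_compat; lra]).
  destruct H; [destruct H0|].
  - rewrite !rpow_pos_eq by auto. unfold Rpower.
    replace (a * b) with (exp (/ p * (p * ln a) + (1 - / p) * (q * ln b))).
    + unfold Rdiv. replace (1 - / p) with (/ q) by lra.
      pose proof (exp_convex (/ p) (p * ln a) (q * ln b)) as H7.
      replace (1 - / p) with (/ q) in H7 by lra. rewrite (Rmult_comm (exp _) (/ p)), (Rmult_comm (exp (q * _)) (/ q)).
      apply H7. split; [left; apply Rinv_0_lt_compat; lra|].
      assert (0 < / q) by (apply Rinv_0_lt_compat; lra). lra.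
    + replace (/ p * (p * ln a) + (1 - / p) * (q * ln b)) with (ln a + ln b).
      * rewrite exp_plus, !exp_ln; auto.
      * replace (1 - / p) with (/ q) by lra. field. lra.
  - subst. rewrite Rmult_0_r. lra.
  - subst. rewrite Rmult_0_l. lra.
Qed.

Lemma rpow_1x : forall a, rpow 1 a = 1.
Proof. intros. rewrite rpow_pos_eq by lra. unfold Rpower. rewrite ln_1, Rmult_0_r. apply exp_0. Qed.

Lemma rpow_inv : forall A a, 0 < A -> rpow (/ A) a = / rpow A a.
Proof.
  intros. pose proof (rpow_gt0 A a H).
  assert (rpow (/ A) a * rpow A a = 1).
  { rewrite <- rpow_mult. rewrite Rinv_l by lra. apply rpow_1x.
    left; apply Rinv_0_lt_compat; auto. lra. }
  field_simplify_eq; [|lra]. lra.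
Qed.

Lemma lqnorm_ge0 : forall d q x, 0 <= lqnorm d q x.
Proof. intros. apply rpow_ge0. Qed.

Lemma sum_rpow_ge0 : forall d q x, 0 <= fsum d (fun i => rpow (Rabs (x i)) q).
Proof. intros. apply fsum_nonneg. intros. apply rpow_ge0. Qed.

Lemma lqnorm_zero : forall d q x, lqnorm d q x = 0 -> forall i, (i < d)%nat -> x i = 0.
Proof.
  intros. unfold lqnorm in H. apply rpow_eq0 in H.
  pose proof (fsum_zero_each _ _ (fun i _ => rpow_ge0 (Rabs (x i)) q) H i H0).
  apply rpow_eq0 in H1. destruct (Req_EM_T (x i) 0); auto. exfalso; apply (Rabs_no_R0 (x i)); auto.
Qed.

Lemma lqnorm_pow : forall d a x, 0 < a -> rpow (lqnorm d a x) a = fsum d (fun i => rpow (Rabs (x i)) a).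
Proof.
  intros. unfold lqnorm. rewrite rpow_rpow by apply sum_rpow_ge0.
  rewrite Rinv_l by lra. apply rpow_1. apply sum_rpow_ge0.
Qed.

Lemma holder_abs : forall d a b x y, 1 < a -> 1 < b -> / a + / b = 1 ->
  fsum d (fun i => Rabs (x i) * Rabs (y i)) <= lqnorm d a x * lqnorm d b y.
Proof.
  intros.
  set (A := lqnorm d a x). set (B := lqnorm d b y).
  assert (HA : 0 <= A) by apply lqnorm_ge0. assert (HB : 0 <= B) by apply lqnorm_ge0.
  destruct HA as [HA|HA]; [destruct HB as [HB|HB]|].
  - assert (E : fsum d (fun i => Rabs (x i) * Rabs (y i)) =
               A * B * fsum d (fun i => (Rabs (x i) / A) * (Rabs (y i) / B))).
    { rewrite <- fsum_scal. apply fsum_ext. intros. field. lra. }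
    rewrite E. rewrite <- (Rmult_1_r (A * B)) at 2.
    apply Rmult_le_compat_l; [nra|].
    assert (Ha : fsum d (fun i => rpow (Rabs (x i) / A) a) = 1).
    { unfold Rdiv. rewrite (fsum_ext _ _ (fun i => rpow (Rabs (x i)) a * / rpow A a)).
      - rewrite fsum_scal_r. unfold A. rewrite lqnorm_pow by lra. field.
        rewrite <- lqnorm_pow by lra. fold A. pose proof (rpow_gt0 A a HA). lra.
      - intros. rewrite rpow_mult, rpow_inv; auto. apply Rabs_pos.
        left; apply Rinv_0_lt_compat; auto. }
    assert (Hb : fsum d (fun i => rpow (Rabs (y i) / B) b) = 1).
    { unfold Rdiv. rewrite (fsum_ext _ _ (fun i => rpow (Rabs (y i)) b * / rpow B b)).
      - rewrite fsum_scal_r. unfold B. rewrite lqnorm_pow by lra. field.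
        rewrite <- lqnorm_pow by lra. fold B. pose proof (rpow_gt0 B b HB). lra.
      - intros. rewrite rpow_mult, rpow_inv; auto. apply Rabs_pos.
        left; apply Rinv_0_lt_compat; auto. }
    eapply Rle_trans.
    + apply fsum_le. intros. apply (young (Rabs (x i) / A) (Rabs (y i) / B) a b); auto.
      * apply Rmult_le_pos; [apply Rabs_pos| left; apply Rinv_0_lt_compat; auto].
      * apply Rmult_le_pos; [apply Rabs_pos| left; apply Rinv_0_lt_compat; auto].
    + rewrite fsum_plus. unfold Rdiv in *. rewrite (fsum_scal_r d (/ a) (fun i => rpow (Rabs (x i) * / A) a)), (fsum_scal_r d (/ b) (fun i => rpow (Rabs (y i) * / B) b)).
      rewrite Ha, Hb. lra.
  - rewrite <- HB, Rmult_0_r. right. rewrite (fsum_ext _ _ (fun _ => 0)). apply fsum_zero.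
    intros. rewrite (lqnorm_zero d b y (eq_sym HB) i H2), Rabs_R0. ring.
  - rewrite <- HA, Rmult_0_l. right. rewrite (fsum_ext _ _ (fun _ => 0)). apply fsum_zero.
    intros. rewrite (lqnorm_zero d a x (eq_sym HA) i H2), Rabs_R0. ring.
Qed.

Lemma lqnorm_ext : forall d q x y, (forall i, (i < d)%nat -> x i = y i) -> lqnorm d q x = lqnorm d q y.
Proof. intros. unfold lqnorm. f_equal. apply fsum_ext. intros. rewrite H; auto. Qed.

Lemma lqnorm_1 : forall d x, lqnorm d 1 x = fsum d (fun i => Rabs (x i)).
Proof.
  intros. unfold lqnorm. rewrite Rinv_1, rpow_1.
  - apply fsum_ext. intros. apply rpow_1, Rabs_pos.
  - apply sum_rpow_ge0.
Qed.

Lemma holder_dual : forall d q x y, 1 <= q ->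
  Rabs (fsum d (fun i => x i * y i)) <= lqnorm d q x * dualnorm d q y.
Proof.
  intros. eapply Rle_trans; [apply fsum_abs|].
  rewrite (fsum_ext _ _ (fun i => Rabs (x i) * Rabs (y i))) by (intros; apply Rabs_mult).
  unfold dualnorm. destruct (Req_EM_T q 1).
  - subst. rewrite lqnorm_1, <- fsum_scal_r. apply fsum_le. intros.
    apply Rmult_le_compat_l; [apply Rabs_pos|]. apply supnorm_ge; auto.
  - apply holder_abs; try lra.
    + apply (Rmult_lt_reg_r (q - 1)); [lra|]. unfold Rdiv. rewrite Rmult_assoc, Rinv_l by lra. lra.
    + field. lra.
Qed.

Lemma lqnorm_scale : forall d q t x, 0 < q ->
  lqnorm d q (fun i => t * x i) = Rabs t * lqnorm d q x.
Proof.
  intros. unfold lqnorm.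
  rewrite (fsum_ext _ _ (fun i => rpow (Rabs t) q * rpow (Rabs (x i)) q)).
  - rewrite fsum_scal, rpow_mult, rpow_rpow, Rinv_r, rpow_1; try lra; try apply Rabs_pos.
    apply rpow_ge0. apply sum_rpow_ge0.
  - intros. rewrite Rabs_mult, rpow_mult; auto; apply Rabs_pos.
Qed.

Lemma minkowski : forall d q x y, 1 <= q ->
  lqnorm d q (fun i => x i + y i) <= lqnorm d q x + lqnorm d q y.
Proof.
  intros. destruct (Req_EM_T q 1).
  - subst. rewrite !lqnorm_1, <- fsum_plus. apply fsum_le. intros. apply Rabs_triang.
  - assert (Hq : 1 < q) by lra.
    set (S := fsum d (fun i => rpow (Rabs (x i + y i)) q)).
    assert (HS : 0 <= S) by apply sum_rpow_ge0.
    pose proof (lqnorm_ge0 d q x). pose proof (lqnorm_ge0 d q y).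
    destruct HS as [HS|HS].
    2:{ unfold lqnorm at 1. fold S. rewrite <- HS, rpow_0x. lra. }
    set (b := q / (q - 1)).
    assert (Hb : 1 < b).
    { apply (Rmult_lt_reg_r (q - 1)); [lra|]. unfold b, Rdiv. rewrite Rmult_assoc, Rinv_l by lra. lra. }
    assert (Hc : / q + / b = 1) by (unfold b; field; lra).
    set (w := fun i => rpow (Rabs (x i + y i)) (q - 1)).
    assert (Hw : lqnorm d b w = rpow S (/ b)).
    { unfold lqnorm. f_equal. apply fsum_ext. intros. unfold w.
      rewrite Rabs_pos_eq by apply rpow_ge0. rewrite rpow_rpow by apply Rabs_pos.
      f_equal. unfold b. field. lra. }
    assert (Hstep : S <= (lqnorm d q x + lqnorm d q y) * rpow S (/ b)).
    { rewrite <- Hw. rewrite Rmult_plus_distr_r.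
      pose proof (holder_abs d q b x w Hq Hb Hc).
      pose proof (holder_abs d q b y w Hq Hb Hc).
      eapply Rle_trans; [|apply Rplus_le_compat; eauto].
      rewrite <- fsum_plus. unfold S. apply fsum_le. intros. unfold w.
      rewrite (Rabs_pos_eq (rpow _ (q - 1))) by apply rpow_ge0.
      destruct (Rabs_pos (x i + y i)) as [Hp|Hp].
      - replace q with (1 + (q - 1)) at 1 by ring. rewrite rpow_plus, rpow_1 by lra.
        pose proof (rpow_ge0 (Rabs (x i + y i)) (q - 1)).
        pose proof (Rabs_triang (x i) (y i)). nra.
      - rewrite <- Hp, !rpow_0x. pose proof (Rabs_pos (x i)). pose proof (Rabs_pos (y i)). nra. }
    assert (E : S = rpow S (/ q) * rpow S (/ b)).
    { rewrite <- rpow_plus by auto. rewrite Hc, rpow_1; lra. }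
    pose proof (rpow_gt0 S (/ b) HS).
    unfold lqnorm at 1. fold S.
    apply (Rmult_le_reg_r (rpow S (/ b))); auto. lra.
Qed.

Lemma lqnorm_convex : forall d q t x y, 1 <= q -> 0 <= t <= 1 ->
  lqnorm d q (fun i => (1 - t) * x i + t * y i) <= (1 - t) * lqnorm d q x + t * lqnorm d q y.
Proof.
  intros. eapply Rle_trans; [apply (minkowski d q (fun i => (1 - t) * x i) (fun i => t * y i)); auto|].
  rewrite !lqnorm_scale by lra. rewrite !Rabs_pos_eq by lra. lra.
Qed.

Lemma mulmv_ext : forall d A v w i, (forall l, (l < d)%nat -> v l = w l) ->
  mulmv d A v i = mulmv d A w i.
Proof. intros. unfold mulmv. apply fsum_ext. intros. rewrite H; auto. Qed.

Lemma mulmv_mulmm : forall d e A B v i,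
  mulmv d (mulmm e A B) v i = mulmv e A (fun m => mulmv d B v m) i.
Proof.
  intros. unfold mulmv, mulmm.
  rewrite (fsum_ext e _ (fun m => fsum d (fun l => A i m * (B m l * v l)))).
  - rewrite fsum_swap. apply fsum_ext. intros. rewrite <- fsum_scal_r.
    apply fsum_ext. intros. ring.
  - intros. rewrite <- fsum_scal. reflexivity.
Qed.

Lemma dot_trmx : forall n p A e v,
  fsum n (fun i => e i * mulmv p A v i) = fsum p (fun l => mulmv n (trmx A) e l * v l).
Proof.
  intros. unfold mulmv, trmx.
  rewrite (fsum_ext n _ (fun i => fsum p (fun l => e i * (A i l * v l)))).
  - rewrite fsum_swap. apply fsum_ext. intros. rewrite <- fsum_scal_r.
    apply fsum_ext. intros. ring.
  - intros. rewrite <- fsum_scal. reflexivity.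
Qed.

Lemma mulmv_sum : forall d k A F i,
  mulmv d A (fun l => fsum k (fun j => F j l)) i = fsum k (fun j => mulmv d A (F j) i).
Proof.
  intros. unfold mulmv.
  rewrite (fsum_ext d _ (fun l => fsum k (fun j => A i l * F j l))).
  - apply fsum_swap.
  - intros. rewrite <- fsum_scal. reflexivity.
Qed.

Lemma mulmv_lin : forall d A a b v w i,
  mulmv d A (fun l => a * v l + b * w l) i = a * mulmv d A v i + b * mulmv d A w i.
Proof.
  intros. unfold mulmv. rewrite <- !fsum_scal, <- fsum_plus. apply fsum_ext. intros. ring.
Qed.

Lemma decomp : forall n p k (X : mat) (M Mp P : nat -> mat) (e v : vec),
  mat_eq p p (fun a b => fsum k (fun j => mulmm p (mulmm p (P j) (Mp j)) (M j) a b)) idmx ->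
  fsum n (fun i => e i * mulmv p X v i) =
  fsum k (fun j => fsum p (fun m =>
     mulmv n (trmx (mulmm p (mulmm p X (P j)) (Mp j))) e m * mulmv p (M j) v m)).
Proof.
  intros n p k X M Mp P e v Hid.
  assert (Hv : forall l, (l < p)%nat ->
     v l = fsum k (fun j => mulmv p (mulmm p (mulmm p (P j) (Mp j)) (M j)) v l)).
  { intros. rewrite <- (fsum_delta p l v) by auto.
    rewrite (fsum_ext p _ (fun b => fsum k (fun j => mulmm p (mulmm p (P j) (Mp j)) (M j) l b * v b))).
    - rewrite fsum_swap. reflexivity.
    - intros. rewrite <- Hid by auto. rewrite fsum_scal_r. reflexivity. }
  rewrite (fsum_ext n _ (fun i => fsum k (fun j => e i *
      mulmv p (mulmm p (mulmm p X (P j)) (Mp j)) (fun m => mulmv p (M j) v m) i))).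
  - rewrite fsum_swap. apply fsum_ext. intros j _. apply dot_trmx.
  - intros i _. rewrite fsum_scal. f_equal.
    rewrite (mulmv_ext p X v _ i Hv), mulmv_sum. apply fsum_ext. intros j _.
    rewrite !mulmv_mulmm. apply mulmv_ext. intros l _.
    rewrite !mulmv_mulmm. reflexivity.
Qed.

Lemma Rabs_le_inv : forall x b, Rabs x <= b -> - b <= x <= b.
Proof. intros. pose proof (Rle_abs x). pose proof (Rle_abs (- x)). rewrite Rabs_Ropp in H1. lra. Qed.

Theorem theorem1
  (n p k : nat) (g gp : R -> R)
  (X : mat) (beta_star : vec) (eps : vec) (Y : vec)
  (M Mp P : nat -> mat) (q c lam : nat -> R) (beta_hat : vec) :
  (* model *)
  (forall i, (i < n)%nat -> Y i = mulmv p X beta_star i + eps i) ->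
  (* link function *)
  link_ok n g gp ->
  (* penalty *)
  (1 <= k)%nat ->
  (forall b : vec, (forall j, (j < k)%nat -> forall i, (i < p)%nat ->
        mulmv p (M j) b i = 0) ->
     forall i, (i < p)%nat -> b i = 0) ->
  (forall j, (j < k)%nat -> 1 <= q j) ->
  (forall j, (j < k)%nat -> is_MP_pinv p (M j) (Mp j)) ->
  (forall j, (j < k)%nat -> is_projection p (P j)) ->
  mat_eq p p (fun a b => fsum k (fun j => mulmm p (mulmm p (P j) (Mp j)) (M j) a b))
             idmx ->
  (* noise assumption (the probability-one event) *)
  (exists i, (i < n)%nat /\ Y i <> 0) ->
  (forall j, (j < k)%nat ->
     0 < dualnorm p (q j) (mulmv n (trmx (mulmm p (mulmm p X (P j)) (Mp j))) eps)) ->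
  (* constants and tuning parameter *)
  (forall j, (j < k)%nat -> 0 < c j) ->
  (forall j, (j < k)%nat -> 0 < lam j) ->
  (* beta_hat is a minimizer of the objective *)
  (forall b : vec, objective n p k g X Y M q lam beta_hat
                   <= objective n p k g X Y M q lam b) ->
  (* g' is evaluated at a point of (0,oo) *)
  0 < sqnorm n (vsub Y (mulmv p X beta_hat)) ->
  (* the tuning condition *)
  (forall j, (j < k)%nat ->
     lam j / (2 * gp (sqnorm n (vsub Y (mulmv p X beta_hat))))
     = c j * dualnorm p (q j) (mulmv n (trmx (mulmm p (mulmm p X (P j)) (Mp j))) eps)) ->
  (* oracle inequality: LHS is a lower bound of the set whose infimum is taken *)
  forall (u : R) (beta : vec), 0 < u < 1 ->
    / INR n * sqnorm n (mulmv p X (vsub beta_star beta_hat))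
    <= / (4 * u * (1 - u) * INR n) * sqnorm n (mulmv p X (vsub beta_star beta))
       + / INR n * fsum k (fun j =>
            (1 + c j) / (1 - u)
            * dualnorm p (q j) (mulmv n (trmx (mulmm p (mulmm p X (P j)) (Mp j))) eps)
            * lqnorm p (q j) (mulmv p (M j) beta))
       - / INR n * fsum k (fun j =>
            (c j - 1) / (1 - u)
            * dualnorm p (q j) (mulmv n (trmx (mulmm p (mulmm p X (P j)) (Mp j))) eps)
            * lqnorm p (q j) (mulmv p (M j) beta_hat)).
Proof.
  intros Hmod Hlink Hk Hker Hq Hmp Hproj Hid HY Hdual Hc Hlam Hmin Hs Htune u beta Hu.
  destruct Hlink as (_ & _ & _ & _ & Hder & _ & Hgp & _).
  set (s := sqnorm n (vsub Y (mulmv p X beta_hat))) in *.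
  pose (d := fun l => beta l - beta_hat l).
  pose (r := vsub Y (mulmv p X beta_hat)).
  pose (Xd := mulmv p X d).
  pose (a := fsum n (fun i => r i * Xd i)).
  pose (e := sqnorm n Xd).
  pose (bt := fun t => fun l => beta_hat l + t * d l).
  pose (f1 := fun t => s - 2 * t * a + t ^ 2 * e).
  pose (Pen := fun b => fsum k (fun j => lam j * lqnorm p (q j) (mulmv p (M j) b))).
  assert (Hn : 0 < INR n).
  { destruct n. unfold s, sqnorm in Hs. rewrite fsum_0 in Hs. lra. apply lt_0_INR. lia. }
  assert (Claim1 : forall t, sqnorm n (vsub Y (mulmv p X (bt t))) = f1 t).
  { intros t. unfold f1, sqnorm, vsub, s, a, e, sqnorm.
    rewrite (fsum_ext n _ (fun i => (r i * r i + (-2 * t) * (r i * Xd i)) + t ^ 2 * (Xd i * Xd i))).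
    - rewrite fsum_plus, fsum_plus, !fsum_scal. unfold r, vsub. ring.
    - intros i _. rewrite (mulmv_ext p X (bt t) (fun l => 1 * beta_hat l + t * d l)) by
        (intros; unfold bt; ring).
      rewrite mulmv_lin. unfold r, vsub, Xd. ring. }
  assert (Claim2 : forall t, 0 <= t <= 1 ->
    fsum k (fun j => lam j * lqnorm p (q j) (mulmv p (M j) (bt t)))
    <= (1 - t) * Pen beta_hat + t * Pen beta).
  { intros t Ht. unfold Pen. rewrite <- !fsum_scal, <- fsum_plus. apply fsum_le.
    intros j Hj. rewrite (lqnorm_ext p (q j) _ (fun i => (1 - t) * mulmv p (M j) beta_hat i + t * mulmv p (M j) beta i)).
    - pose proof (lqnorm_convex p (q j) t (mulmv p (M j) beta_hat) (mulmv p (M j) beta) (Hq j Hj) Ht).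
      pose proof (Hlam j Hj). nra.
    - intros i _. rewrite <- mulmv_lin. apply mulmv_ext. intros. unfold bt, d. ring. }
  assert (Claim3 : forall t, 0 <= t <= 1 -> g (f1 t) - g s >= t * (Pen beta_hat - Pen beta)).
  { intros t Ht. pose proof (Hmin (bt t)) as H. unfold objective in H. rewrite Claim1 in H.
    fold s in H. pose proof (Claim2 t Ht). change (fsum k (fun j => lam j * lqnorm p (q j) (mulmv p (M j) beta_hat))) with (Pen beta_hat) in H.
    lra. }
  assert (Hf1 : derivable_pt_lim f1 0 (-2 * a)).
  { intros eps0 Heps. assert (He1 : 0 < Rabs e + 1) by (pose proof (Rabs_pos e); lra).
    assert (Hpos : 0 < eps0 / (Rabs e + 1)) by (apply Rdiv_lt_0_compat; lra).
    exists (mkposreal _ Hpos). simpl. intros h Hh Hlt.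
    replace ((f1 (0 + h) - f1 0) / h - -2 * a) with (h * e) by (unfold f1; field; auto).
    rewrite Rabs_mult.
    assert (Rabs h * (Rabs e + 1) < eps0).
    { apply (Rmult_lt_compat_r (Rabs e + 1)) in Hlt; auto.
      unfold Rdiv in Hlt. rewrite Rmult_assoc, Rinv_l in Hlt; lra. }
    pose proof (Rabs_pos h). pose proof (Rabs_pos e). nra. }
  assert (Hgs : derivable_pt_lim g (f1 0) (gp s)).
  { replace (f1 0) with s by (unfold f1; ring). apply Hder; auto. }
  pose proof (derivable_pt_lim_comp f1 g 0 (-2 * a) (gp s) Hf1 Hgs) as Hcomp.
  assert (Claim4 : gp s * (-2 * a) >= Pen beta_hat - Pen beta).
  { destruct (Rle_or_lt (Pen beta_hat - Pen beta) (gp s * (-2 * a))) as [Hle|Hlt]; [lra|].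
    exfalso.
    assert (Heps : 0 < (Pen beta_hat - Pen beta - gp s * (-2 * a)) / 2) by lra.
    destruct (Hcomp _ Heps) as [delta Hdelta].
    pose (h := Rmin (delta / 2) 1).
    assert (Hh0 : 0 < h) by (unfold h; apply Rmin_pos; [pose proof (cond_pos delta); lra| lra]).
    assert (Hh1 : h <= 1) by apply Rmin_r.
    assert (Hh2 : h <= delta / 2) by apply Rmin_l.
    assert (Hhd : Rabs h < delta) by (rewrite Rabs_pos_eq by lra; pose proof (cond_pos delta); lra).
    specialize (Hdelta h ltac:(lra) Hhd).
    unfold comp in Hdelta. replace (0 + h) with h in Hdelta by ring.
    replace (f1 0) with s in Hdelta by (unfold f1; ring).
    pose proof (Claim3 h ltac:(lra)) as H3.
    assert (Hq3 : (g (f1 h) - g s) / h >= Pen beta_hat - Pen beta).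
    { apply Rle_ge. apply (Rmult_le_reg_r h); [lra|]. unfold Rdiv.
      rewrite Rmult_assoc, Rinv_l by lra. lra. }
    apply Rabs_def2 in Hdelta. lra. }
  assert (Hgps : 0 < gp s) by (apply Hgp; auto).
  assert (Claim5 : a <= fsum k (fun j =>
      c j * dualnorm p (q j) (mulmv n (trmx (mulmm p (mulmm p X (P j)) (Mp j))) eps)
      * (lqnorm p (q j) (mulmv p (M j) beta) - lqnorm p (q j) (mulmv p (M j) beta_hat)))).
  { assert (E : Pen beta - Pen beta_hat = 2 * gp s * fsum k (fun j =>
      c j * dualnorm p (q j) (mulmv n (trmx (mulmm p (mulmm p X (P j)) (Mp j))) eps)
      * (lqnorm p (q j) (mulmv p (M j) beta) - lqnorm p (q j) (mulmv p (M j) beta_hat)))).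
    { unfold Pen. rewrite <- fsum_minus, <- fsum_scal. apply fsum_ext. intros j Hj.
      rewrite <- (Htune j Hj). field. lra. }
    nra. }
  pose (W := mulmv p X (vsub beta_star beta_hat)).
  pose (V := mulmv p X (vsub beta_star beta)).
  assert (Claim6 : a = fsum n (fun i => W i * W i) - fsum n (fun i => W i * V i)
                       + fsum n (fun i => eps i * mulmv p X d i)).
  { unfold a. rewrite <- fsum_minus, <- fsum_plus. apply fsum_ext. intros i Hi.
    assert (Hr : r i = W i + eps i).
    { unfold r, vsub, W. rewrite Hmod by auto.
      rewrite (mulmv_ext p X (vsub beta_star beta_hat) (fun l => 1 * beta_star l + (-1) * beta_hat l))
        by (intros; unfold vsub; ring).
      rewrite mulmv_lin. ring. }
    assert (HXd : Xd i = W i - V i).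
    { unfold Xd, W, V.
      rewrite (mulmv_ext p X d (fun l => 1 * vsub beta_star beta_hat l + (-1) * vsub beta_star beta l))
        by (intros; unfold vsub, d; ring).
      rewrite mulmv_lin. ring. }
    rewrite Hr. change (mulmv p X d i) with (Xd i). rewrite HXd. ring. }
  assert (Claim7 : fsum n (fun i => eps i * mulmv p X d i) >= - fsum k (fun j =>
      dualnorm p (q j) (mulmv n (trmx (mulmm p (mulmm p X (P j)) (Mp j))) eps)
      * (lqnorm p (q j) (mulmv p (M j) beta) + lqnorm p (q j) (mulmv p (M j) beta_hat)))).
  { rewrite (decomp n p k X M Mp P eps d Hid). rewrite <- fsum_opp. apply Rle_ge, fsum_le.
    intros j Hj.
    set (z := mulmv n (trmx (mulmm p (mulmm p X (P j)) (Mp j))) eps).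
    rewrite (fsum_ext p _ (fun m => mulmv p (M j) beta m * z m - mulmv p (M j) beta_hat m * z m)).
    - rewrite fsum_minus.
      pose proof (holder_dual p (q j) (mulmv p (M j) beta) z (Hq j Hj)) as H1.
      pose proof (holder_dual p (q j) (mulmv p (M j) beta_hat) z (Hq j Hj)) as H2.
      apply Rabs_le_inv in H1. apply Rabs_le_inv in H2. lra.
    - intros m _. unfold d.
      rewrite (mulmv_ext p (M j) (fun l => beta l - beta_hat l) (fun l => 1 * beta l + (-1) * beta_hat l))
        by (intros; ring).
      rewrite mulmv_lin. ring. }
  assert (Claim8 : 4 * u * fsum n (fun i => W i * V i) <=
     4 * u * u * fsum n (fun i => W i * W i) + fsum n (fun i => V i * V i)).
  { assert (H0 : 0 <= fsum n (fun i => (2 * u * W i - V i) * (2 * u * W i - V i)))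
      by (apply fsum_nonneg; intros; apply Rle_0_sqr).
    rewrite (fsum_ext n _ (fun i => (4 * u * u) * (W i * W i) - (4 * u) * (W i * V i) + V i * V i)) in H0
      by (intros; ring).
    rewrite fsum_plus, fsum_minus, !fsum_scal in H0. lra. }
  assert (Hsum : fsum k (fun j =>
      dualnorm p (q j) (mulmv n (trmx (mulmm p (mulmm p X (P j)) (Mp j))) eps)
      * (lqnorm p (q j) (mulmv p (M j) beta) + lqnorm p (q j) (mulmv p (M j) beta_hat)))
    + fsum k (fun j =>
      c j * dualnorm p (q j) (mulmv n (trmx (mulmm p (mulmm p X (P j)) (Mp j))) eps)
      * (lqnorm p (q j) (mulmv p (M j) beta) - lqnorm p (q j) (mulmv p (M j) beta_hat)))
    = fsum k (fun j => (1 + c j)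
            * dualnorm p (q j) (mulmv n (trmx (mulmm p (mulmm p X (P j)) (Mp j))) eps)
            * lqnorm p (q j) (mulmv p (M j) beta))
      - fsum k (fun j => (c j - 1)
            * dualnorm p (q j) (mulmv n (trmx (mulmm p (mulmm p X (P j)) (Mp j))) eps)
            * lqnorm p (q j) (mulmv p (M j) beta_hat))).
  { rewrite <- fsum_plus, <- fsum_minus. apply fsum_ext. intros. ring. }
  rewrite (fsum_ext k (fun j => (1 + c j) / (1 - u)
            * dualnorm p (q j) (mulmv n (trmx (mulmm p (mulmm p X (P j)) (Mp j))) eps)
            * lqnorm p (q j) (mulmv p (M j) beta))
     (fun j => / (1 - u) * ((1 + c j)
            * dualnorm p (q j) (mulmv n (trmx (mulmm p (mulmm p X (P j)) (Mp j))) eps)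
            * lqnorm p (q j) (mulmv p (M j) beta)))) by (intros; unfold Rdiv; ring).
  rewrite (fsum_ext k (fun j => (c j - 1) / (1 - u)
            * dualnorm p (q j) (mulmv n (trmx (mulmm p (mulmm p X (P j)) (Mp j))) eps)
            * lqnorm p (q j) (mulmv p (M j) beta_hat))
     (fun j => / (1 - u) * ((c j - 1)
            * dualnorm p (q j) (mulmv n (trmx (mulmm p (mulmm p X (P j)) (Mp j))) eps)
            * lqnorm p (q j) (mulmv p (M j) beta_hat)))) by (intros; unfold Rdiv; ring).
  rewrite !fsum_scal.
  change (sqnorm n (mulmv p X (vsub beta_star beta_hat))) with (fsum n (fun i => W i * W i)).
  change (sqnorm n (mulmv p X (vsub beta_star beta))) with (fsum n (fun i => V i * V i)).
  set (S1 := fsum k (fun j => (1 + c j)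
            * dualnorm p (q j) (mulmv n (trmx (mulmm p (mulmm p X (P j)) (Mp j))) eps)
            * lqnorm p (q j) (mulmv p (M j) beta))) in *.
  set (S2 := fsum k (fun j => (c j - 1)
            * dualnorm p (q j) (mulmv n (trmx (mulmm p (mulmm p X (P j)) (Mp j))) eps)
            * lqnorm p (q j) (mulmv p (M j) beta_hat))) in *.
  set (AA := fsum n (fun i => W i * W i)) in *.
  set (CC := fsum n (fun i => V i * V i)) in *.
  set (BB := fsum n (fun i => W i * V i)) in *.
  assert (Hkey : 4 * u * (1 - u) * AA <= CC + 4 * u * (S1 - S2)) by nra.
  assert (Hpos : 0 < 4 * u * (1 - u) * INR n) by (apply Rmult_lt_0_compat; [|auto]; nra).
  apply (Rmult_le_reg_l (4 * u * (1 - u) * INR n)); auto.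
  replace (4 * u * (1 - u) * INR n *
     (/ (4 * u * (1 - u) * INR n) * CC + / INR n * (/ (1 - u) * S1) - / INR n * (/ (1 - u) * S2)))
    with (CC + 4 * u * (S1 - S2)) by (field; lra).
  replace (4 * u * (1 - u) * INR n * (/ INR n * AA)) with (4 * u * (1 - u) * AA) by (field; lra).
  exact Hkey.
Qed.
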